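(* Let $\boldsymbol{h}_1,\dots,\boldsymbol{h}_K\in\mathbb{C}^{N_t\times1}$, $\Gamma\ge0$, $P>0$, and let $\lambda\ge0$, $\mu_1,\dots,\mu_K\ge0$ be such that $\boldsymbol{A}(\lambda,\{\mu_k\}):=\lambda\boldsymbol{I}-\sum_{k=1}^K\mu_k\boldsymbol{h}_k\boldsymbol{h}_k^H\succeq\boldsymbol{0}$. Let $N=\mathrm{rank}(\boldsymbol{A}(\lambda,\{\mu_k\}))\le N_t$ and let $\boldsymbol{A}(\lambda,\{\mu_k\})=\boldsymbol{U}\boldsymbol{\Lambda}\boldsymbol{U}^H$ be an eigenvalue decomposition with $\boldsymbol{U}$ unitary and $\boldsymbol{\Lambda}=\mathrm{diag}(\alpha_1,\dots,\alpha_{N_t})$, $\alpha_1\ge\dots\ge\alpha_{N_t}$ (so $\alpha_i>0$ for $i\le N$ and $\alpha_i=0$ for $i>N$). Consider the problem of minimizing over $\boldsymbol{S}_x\succeq\boldsymbol{0}$ the function $$\mathcal{L}(\boldsymbol{S}_x,\lambda,\{\mu_k\}) = \mathrm{tr}(\boldsymbol{S}_x^{-1}) + \Gamma\sum_{k=1}^K\mu_k + \mathrm{tr}\big(\boldsymbol{A}(\lambda,\{\mu_k\})\boldsymbol{S}_x\big) - \lambda P,$$ with $\mathrm{tr}(\boldsymbol{S}_x^{-1})=+\infty$ for singular $\boldsymbol{S}_x$. Then the optimal solution is $\boldsymbol{S}_x^{*}=\boldsymbol{U}\boldsymbol{\Sigma}\boldsymbol{U}^H$ with $\boldsymbol{\Sigma}=\mathrm{diag}(\tau_1,\dots,\tau_{N_t})$,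 where $\tau_i=\alpha_i^{-1/2}$ for $i\le N$ and $\tau_i\to+\infty$ for $N<i\le N_t$. Precisely: if $N=N_t$, then $\boldsymbol{U}\,\mathrm{diag}(\alpha_1^{-1/2},\dots,\alpha_{N_t}^{-1/2})\,\boldsymbol{U}^H$ minimizes $\mathcal{L}(\cdot,\lambda,\{\mu_k\})$ over $\boldsymbol{S}_x\succeq\boldsymbol{0}$; and in general, $\inf_{\boldsymbol{S}_x\succeq\boldsymbol{0}}\mathcal{L}(\boldsymbol{S}_x,\lambda,\{\mu_k\}) = \lim_{t\to+\infty}\mathcal{L}\big(\boldsymbol{U}\,\mathrm{diag}(\alpha_1^{-1/2},\dots,\alpha_N^{-1/2},t,\dots,t)\,\boldsymbol{U}^H,\lambda,\{\mu_k\}\big)$.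
   Context: $\boldsymbol{S}\succeq\boldsymbol{0}$ denotes Hermitian positive semidefinite; $(\cdot)^H$ is conjugate transpose; $\boldsymbol{I}$ is the $N_t\times N_t$ identity. *)

(* Defs.v *)
From HB Require Import structures.
From mathcomp Require Import all_boot all_order all_algebra.
From mathcomp Require Import all_classical all_reals all_analysis.
From mathcomp Require Import complex.
Set Implicit Arguments. Unset Strict Implicit. Unset Printing Implicit Defensive.
Import Order.TTheory GRing.Theory Num.Theory.
Local Open Scope ring_scope.

Definition ctmx (R : rcfType) (m n : nat) (A : 'M[R[i]]_(m, n)) : 'M[R[i]]_(n, m) :=
  (map_mx (@conjc R) A)^T.

Definition psd (R : rcfType) (n : nat) (A : 'M[R[i]]_n) : Prop :=
  ctmx A = A /\ forall v : 'cV[R[i]]_n, 0 <= (ctmx v *m A *m v) 0 0.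

Definition rdiag (R : rcfType) (n : nat) (d : 'I_n -> R) : 'M[R[i]]_n :=
  diag_mx (\row_j (d j)%:C%C).

Definition Amat (R : rcfType) (n K : nat) (h : 'I_K -> 'cV[R[i]]_n)
  (lam : R) (mu : 'I_K -> R) : 'M[R[i]]_n :=
  (lam%:C%C)%:M - \sum_(k < K) ((mu k)%:C%C *: (h k *m ctmx (h k))).

(* the (real-valued) Lagrangian for nonsingular S; tr(S^{-1}) and tr(A S) are real
   for Hermitian S, A, so we take real parts *)
Definition Lreal (R : rcfType) (n K : nat) (h : 'I_K -> 'cV[R[i]]_n)
  (Gam P lam : R) (mu : 'I_K -> R) (S : 'M[R[i]]_n) : R :=
  complex.Re (\tr (invmx S)) + Gam * \sum_(k < K) mu k
  + complex.Re (\tr (Amat h lam mu *m S)) - lam * P.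

Definition Lag (R : realType) (n K : nat) (h : 'I_K -> 'cV[R[i]]_n)
  (Gam P lam : R) (mu : 'I_K -> R) (S : 'M[R[i]]_n) : \bar R :=
  if S \in unitmx then (Lreal h Gam P lam mu S)%:E else +oo%E.

(* Main.v *)
Require Import Defs.
From HB Require Import structures.
From mathcomp Require Import all_boot all_order all_algebra.
From mathcomp Require Import all_classical all_reals all_analysis.
From mathcomp Require Import complex.
From mathcomp Require Import ring lra.
Set Implicit Arguments. Unset Strict Implicit. Unset Printing Implicit Defensive.
Import Order.TTheory GRing.Theory Num.Theory.
Local Open Scope ring_scope.

Section LA.
Variable R : rcfType.
Local Notation C := R[i].

Lemma ctmxM m n p (A : 'M[C]_(m, n)) (B : 'M[C]_(n, p)) :
  ctmx (A *m B) = ctmx B *m ctmx A.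
Proof. by rewrite /ctmx map_mxM trmx_mul. Qed.

Lemma ctmxK m n (A : 'M[C]_(m, n)) : ctmx (ctmx A) = A.
Proof. by apply/matrixP => i j; rewrite !mxE conjcK. Qed.

Lemma ctmxD m n (A B : 'M[C]_(m, n)) : ctmx (A + B) = ctmx A + ctmx B.
Proof. by apply/matrixP => i j; rewrite !mxE rmorphD. Qed.

Lemma ctmxN m n (A : 'M[C]_(m, n)) : ctmx (- A) = - ctmx A.
Proof. by apply/matrixP => i j; rewrite !mxE rmorphN. Qed.

Lemma ctmx1 n : ctmx (1%:M : 'M[C]_n) = 1%:M.
Proof.
by rewrite /ctmx map_mx1 trmx1.
Qed.

Lemma ctmx_rdiag n (d : 'I_n -> R) : ctmx (rdiag d) = rdiag d.
Proof.
apply/matrixP => i j; rewrite !mxE.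
by case: eqVneq => [->|_]; rewrite /= ?mulr1n ?mulr0n oppr0.
Qed.

Lemma rdiagM n (a b : 'I_n -> R) : rdiag a *m rdiag b = rdiag (fun i => a i * b i).
Proof.
rewrite /rdiag mulmx_diag; congr diag_mx; apply/rowP => j; rewrite !mxE.
by rewrite rmorphM.
Qed.

Lemma tr_rdiag n (a : 'I_n -> R) : \tr (rdiag a) = (\sum_i a i)%:C%C.
Proof.
rewrite /rdiag mxtrace_diag rmorph_sum; apply: eq_bigr => j _; by rewrite mxE.
Qed.

Lemma invmx_uniq n (A B : 'M[C]_n) : A *m B = 1%:M -> invmx A = B.
Proof.
move=> AB; have [uA _] := mulmx1_unit AB.
by rewrite -[invmx A]mulmx1 -AB mulmxA mulVmx // mul1mx.
Qed.

Lemma ctmx_inv n (A : 'M[C]_n) : ctmx (invmx A) = invmx (ctmx A).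
Proof. by rewrite /ctmx map_invmx trmx_inv. Qed.


Lemma ctmx_delta n (j : 'I_n) : ctmx (delta_mx j 0 : 'cV[C]_n) = delta_mx 0 j.
Proof. by apply/matrixP => a b; rewrite !mxE conjc_nat andbC !ord1 eqxx eq_sym. Qed.

Lemma diag_entry n (X : 'M[C]_n) j : X j j = (delta_mx (0:'I_1) j *m X *m delta_mx j (0:'I_1)) 0 0.
Proof. by rewrite -rowE -colE !mxE. Qed.

Lemma psd_quad_tr n (Q : 'M[C]_n) (M : 'M[C]_n) : psd Q -> 0 <= \tr (ctmx M *m Q *m M).
Proof.
move=> [_ HQ]; rewrite /mxtrace; apply: sumr_ge0 => j _.
rewrite diag_entry.
have -> : delta_mx (0:'I_1) j *m (ctmx M *m Q *m M) *m delta_mx j (0:'I_1)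
  = ctmx (M *m delta_mx j (0:'I_1)) *m Q *m (M *m delta_mx j (0:'I_1)).
  by rewrite ctmxM ctmx_delta !mulmxA.
exact: HQ.
Qed.

Lemma psd_inv n (S : 'M[C]_n) : psd S -> S \in unitmx -> psd (invmx S).
Proof.
move=> [HS Hq] uS; split; first by rewrite ctmx_inv HS.
move=> v; have -> : v = S *m (invmx S *m v) by rewrite mulKVmx.
rewrite ctmxM HS mulmxA mulmxKV // -mulmxA mulKVmx //; exact: Hq.
Qed.

Lemma key n (S B : 'M[C]_n) : psd S -> S \in unitmx -> ctmx B = B ->
  \tr (invmx S) + \tr (B *m S *m B) - 2%:R * \tr B
  = \tr (ctmx (1%:M - S *m B) *m invmx S *m (1%:M - S *m B)).
Proof.
move=> [HS _] uS HB.
rewrite ctmxD ctmxN ctmx1 ctmxM HS HB.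
rewrite mulmxBl mul1mx mulmxK // mulmxBl !mulmxBr !mulmx1 mulmxA mulVmx // mul1mx !mulmxA.
rewrite !raddfB /=; ring.
Qed.


Lemma rdiag_entry n (d : 'I_n -> R) i : rdiag d i i = (d i)%:C%C.
Proof. by rewrite !mxE eqxx mulr1n. Qed.

Variables (n : nat) (U : 'M[C]_n).
Hypotheses (HU1 : U *m ctmx U = 1%:M) (HU2 : ctmx U *m U = 1%:M).

Lemma conjM (d e : 'I_n -> R) :
  (U *m rdiag d *m ctmx U) *m (U *m rdiag e *m ctmx U)
  = U *m rdiag (fun i => d i * e i) *m ctmx U.
Proof.
by rewrite !mulmxA -(mulmxA _ (ctmx U)) HU2 mulmx1 -(mulmxA U) rdiagM.
Qed.

Lemma conj_tr (d : 'I_n -> R) : \tr (U *m rdiag d *m ctmx U) = (\sum_i d i)%:C%C.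
Proof. by rewrite mxtrace_mulC mulmxA HU2 mul1mx tr_rdiag. Qed.

Lemma conj_ct (d : 'I_n -> R) : ctmx (U *m rdiag d *m ctmx U) = U *m rdiag d *m ctmx U.
Proof. by rewrite !ctmxM ctmxK ctmx_rdiag mulmxA. Qed.

Lemma conj_inv (d : 'I_n -> R) : (forall i, d i != 0) ->
  U *m rdiag d *m ctmx U \in unitmx /\
  invmx (U *m rdiag d *m ctmx U) = U *m rdiag (fun i => (d i)^-1) *m ctmx U.
Proof.
move=> nz.
have E : (U *m rdiag d *m ctmx U) *m (U *m rdiag (fun i => (d i)^-1) *m ctmx U) = 1%:M.
  rewrite conjM.
  have -> : rdiag (fun i => d i * (d i)^-1) = 1%:M.
    apply/matrixP => i j; rewrite !mxE divff //.
  by rewrite mulmx1.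
by split; [case: (mulmx1_unit E) | apply: invmx_uniq].
Qed.

Lemma conj_psd (d : 'I_n -> R) : (forall i, 0 <= d i) -> psd (U *m rdiag d *m ctmx U).
Proof.
move=> pd; split; first exact: conj_ct.
move=> v; set w := ctmx U *m v.
have -> : ctmx v *m (U *m rdiag d *m ctmx U) *m v = ctmx w *m rdiag d *m w.
  by rewrite /w ctmxM ctmxK !mulmxA.
rewrite /rdiag mul_mx_diag !mxE; apply: sumr_ge0 => k _; rewrite !mxE.
rewrite mulrC mulrA; apply: mulr_ge0; last by rewrite ler0c.
exact: mulcJ_ge0.
Qed.

Lemma alpha_ge0 (alpha : 'I_n -> R) : psd (U *m rdiag alpha *m ctmx U) -> forall i, 0 <= alpha i.
Proof.
move=> [_ Hq] i; move: (Hq (U *m delta_mx i (0:'I_1))).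
rewrite ctmxM ctmx_delta.
have -> : delta_mx 0 i *m ctmx U *m (U *m rdiag alpha *m ctmx U) *m (U *m delta_mx i 0)
   = delta_mx (0:'I_1) i *m rdiag alpha *m delta_mx i (0:'I_1).
  by rewrite !mulmxA -(mulmxA _ (ctmx U)) HU2 mulmx1 -(mulmxA _ (ctmx U)) HU2 mulmx1.
by rewrite -diag_entry rdiag_entry ler0c.
Qed.

Lemma unitU : U \in unitmx. Proof. by case: (mulmx1_unit HU1). Qed.
Lemma unitUh : ctmx U \in unitmx. Proof. by case: (mulmx1_unit HU1). Qed.

Lemma rank_conj (d : 'I_n -> R) : \rank (U *m rdiag d *m ctmx U) = \rank (rdiag d).
Proof.
rewrite mxrankMfree ?row_free_unit ?unitUh //.
by rewrite (eqmxMfull _ (_ : row_full U)) // row_full_unit unitU.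
Qed.

Lemma rank_split (alpha : 'I_n -> R) : (forall i, 0 <= alpha i) ->
  (forall i j : 'I_n, (i <= j)%N -> alpha j <= alpha i) ->
  (forall i : 'I_n, (i < \rank (rdiag alpha))%N -> 0 < alpha i) /\
  (forall i : 'I_n, (\rank (rdiag alpha) <= i)%N -> alpha i = 0).
Proof.
move=> a0 mono.
pose P j := [forall i : 'I_n, (j <= i)%N ==> (alpha i == 0)].
have exP : exists j, P j by exists n; apply/forallP => i; rewrite leqNgt ltn_ord.
case: (ex_minnP exP) => m Pm minm.
have mn : (m <= n)%N by apply: minm; apply/forallP => i; rewrite leqNgt ltn_ord.
have nz : forall i : 'I_n, (i < m)%N -> alpha i != 0.
  move=> i im; apply/negP => /eqP ai0.
  have : P i.
    apply/forallP => j; apply/implyP => ij; rewrite eq_le a0 andbT.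
    by rewrite -ai0; apply: mono.
  by move/minm; rewrite leqNgt im.
have z : forall i : 'I_n, (m <= i)%N -> alpha i = 0.
  by move=> i mi; move/forallP: Pm => /(_ i) /implyP /(_ mi) /eqP.
pose d' := fun i : 'I_n => if (i < m)%N then alpha i else 1.
have nz' : forall i, d' i != 0 by move=> i; rewrite /d'; case: ifP => [/nz|_] //; rewrite oner_eq0.
have E : rdiag alpha = pid_mx m *m rdiag d'.
  apply/matrixP => i j; rewrite /rdiag mul_mx_diag !mxE /d'.
  case: eqVneq => [<-|ij] /=; last by rewrite (negbTE (ij : (i:nat) != j)) mulr0n mul0r.
  rewrite ?eqxx /= mulr1n; case: ifP => im; first by rewrite mul1r.
  by rewrite mul0r z // leqNgt im.
have uD : rdiag d' \in unitmx.
  have E2 : rdiag d' *m rdiag (fun i => (d' i)^-1) = 1%:M.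
    rewrite rdiagM; apply/matrixP => i j; rewrite !mxE divff //.
  by case: (mulmx1_unit E2).
have -> : \rank (rdiag alpha) = m.
  by rewrite E mxrankMfree ?row_free_unit // rank_pid_mx.
split => // i im; rewrite lt_def a0 andbT; exact: nz.
Qed.

End LA.

Lemma lower (R : rcfType) (n K : nat) (h : 'I_K -> 'cV[R[i]]_n) (Gam P lam : R)
  (mu : 'I_K -> R) (U : 'M[R[i]]_n) (alpha : 'I_n -> R) (S : 'M[R[i]]_n) :
  U *m ctmx U = 1%:M -> ctmx U *m U = 1%:M ->
  Amat h lam mu = U *m rdiag alpha *m ctmx U -> (forall i, 0 <= alpha i) ->
  psd S -> S \in unitmx ->
  2 * \sum_i Num.sqrt (alpha i) + Gam * \sum_(k < K) mu k - lam * P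
    <= Lreal h Gam P lam mu S.
Proof.
move=> HU1 HU2 HA a0 pS uS.
pose B := U *m rdiag (fun i => Num.sqrt (alpha i)) *m ctmx U.
have HB : ctmx B = B by rewrite conj_ct.
have BB : B *m B = Amat h lam mu.
  rewrite conjM // HA; congr (_ *m _ *m _); apply/matrixP => i j.
  by rewrite !mxE -expr2 sqr_sqrtr.
have trB : \tr B = (\sum_i Num.sqrt (alpha i))%:C%C by rewrite conj_tr.
have trBSB : \tr (B *m S *m B) = \tr (Amat h lam mu *m S).
  by rewrite mxtrace_mulC mulmxA BB.
have := key pS uS HB; rewrite trBSB trB => E.
have H := psd_quad_tr (1%:M - S *m B) (psd_inv pS uS).
rewrite -E in H; move: H; rewrite /Lreal.
case: (\tr (invmx S)) => a1 a2; case: (\tr (Amat h lam mu *m S)) => b1 b2.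
rewrite lecE /= => /andP [_] ?; lra.
Qed.

Lemma value (R : rcfType) (n K : nat) (h : 'I_K -> 'cV[R[i]]_n) (Gam P lam : R)
  (mu : 'I_K -> R) (U : 'M[R[i]]_n) (alpha tau : 'I_n -> R) :
  U *m ctmx U = 1%:M -> ctmx U *m U = 1%:M ->
  Amat h lam mu = U *m rdiag alpha *m ctmx U -> (forall i, tau i != 0) ->
  U *m rdiag tau *m ctmx U \in unitmx /\
  Lreal h Gam P lam mu (U *m rdiag tau *m ctmx U) =
  \sum_i (tau i)^-1 + Gam * \sum_(k < K) mu k + \sum_i (alpha i * tau i) - lam * P.
Proof.
move=> HU1 HU2 HA nz; have [uS iS] := conj_inv HU1 HU2 nz.
split => //; rewrite /Lreal iS HA conjM // !conj_tr //.
Qed.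

Unset Implicit Arguments.
Set Strict Implicit.
Local Open Scope classical_set_scope.

Theorem lemma3 (R : realType) (Nt K : nat) (h : 'I_K -> 'cV[R[i]]_Nt)
  (Gam P lam : R) (mu : 'I_K -> R)
  (U : 'M[R[i]]_Nt) (alpha : 'I_Nt -> R) :
  0 <= Gam -> 0 < P -> 0 <= lam -> (forall k, 0 <= mu k) ->
  psd (Amat h lam mu) ->
  U *m ctmx U = 1%:M -> ctmx U *m U = 1%:M ->
  Amat h lam mu = U *m rdiag alpha *m ctmx U ->
  (forall i j : 'I_Nt, (i <= j)%N -> alpha j <= alpha i) ->
  let N := \rank (Amat h lam mu) in
  let Sopt := U *m rdiag (fun i => (Num.sqrt (alpha i))^-1) *m ctmx U in
  let St := fun t : R =>
    U *m rdiag (fun i => if (i < N)%N then (Num.sqrt (alpha i))^-1 else t) *m ctmx U in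
  (N = Nt ->
     psd Sopt /\
     forall S : 'M[R[i]]_Nt, psd S ->
       (Lag h Gam P lam mu Sopt <= Lag h Gam P lam mu S)%E)
  /\
  Lag h Gam P lam mu (St t) @[t --> +oo] -->
    ereal_inf [set Lag h Gam P lam mu S | S in @psd R Nt].
Proof.
move=> G0 P0 l0 m0 pA HU1 HU2 HA mono N Sopt St.
have pA' : psd (U *m rdiag alpha *m ctmx U) by rewrite -HA.
have a0 := alpha_ge0 HU2 pA'.
have [pos zer] := rank_split a0 mono.
have HN : N = \rank (rdiag alpha) by rewrite /N HA (rank_conj HU1).
rewrite -HN in pos zer.
pose c := 2 * \sum_i Num.sqrt (alpha i) + Gam * \sum_(k < K) mu k - lam * P.
pose k := \sum_(i < Nt) (if (i < N)%N then 0 else 1 : R).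
have LB : forall S, psd S -> (c%:E <= Lag h Gam P lam mu S)%E.
  move=> S pS; rewrite /Lag; case: ifP => uS; last exact: leey.
  by rewrite lee_fin; apply: (lower Gam P HU1 HU2 HA a0 pS uS).
have VAL : forall t, 0 < t -> St t \in unitmx /\ Lag h Gam P lam mu (St t) = (c + k * t^-1)%:E.
  move=> t t0.
  have nz : forall i : 'I_Nt, (if (i < N)%N then (Num.sqrt (alpha i))^-1 else t) != 0.
    move=> i; case: ifP => iN; last by rewrite gt_eqF.
    by rewrite invr_eq0 gt_eqF // sqrtr_gt0 pos.
  have [uS E] := value Gam P HU1 HU2 HA nz.
  rewrite /St; split => //; rewrite /Lag uS E; congr EFin.
  rewrite /c /k.
  suff -> : \sum_(i < Nt) (if (i < N)%N then (Num.sqrt (alpha i))^-1 else t)^-1 =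
    2 * \sum_(i < Nt) Num.sqrt (alpha i) + (\sum_(i < Nt) (if (i < N)%N then 0 else 1)) / t -
    \sum_(i < Nt) alpha i * (if (i < N)%N then (Num.sqrt (alpha i))^-1 else t) by lra.
  apply/eqP; rewrite eq_sym subr_eq; apply/eqP.
  rewrite mulr_sumr mulr_suml -!big_split /=; apply: eq_bigr => i _.
  case: ifP => iN.
    set s := Num.sqrt (alpha i).
    have sp : 0 < s by rewrite sqrtr_gt0 pos.
    have -> : alpha i = s * s by rewrite -expr2 sqr_sqrtr.
    rewrite invrK mulrK ?unitfE ?gt_eqF //; lra.
  rewrite zer; last by rewrite leqNgt iN.
  rewrite sqrtr0; lra.
have pSt : forall t, 0 <= t -> psd (St t).
  move=> t t0; apply: conj_psd => i; case: ifP => // _.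
have k0 : 0 <= k by apply: sumr_ge0 => i _; case: ifP.
split.
  move=> HNt.
  have ES : Sopt = St 1.
    rewrite /Sopt /St; congr (_ *m rdiag _ *m _); apply: funext => i.
    by rewrite HNt ltn_ord.
  have kz : k = 0 by apply: big1 => i _; rewrite HNt ltn_ord.
  split; first by rewrite ES; apply: pSt.
  move=> S pS; rewrite ES (VAL 1 ltr01).2 kz mul0r addr0; exact: LB.
have Inf : ereal_inf [set Lag h Gam P lam mu S | S in @psd R Nt] = c%:E.
  apply/eqP; rewrite eq_le; apply/andP; split; last first.
    by apply: le_ereal_inf_tmp => _ [S pS <-]; exact: LB.
  apply/lee_addgt0Pr => e e0.
  have k1 : 0 < k + 1 by lra.
  have t0 : 0 < (k + 1) / e by apply: divr_gt0.
  apply: ge_ereal_inf; exists (Lag h Gam P lam mu (St ((k + 1) / e))).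
    by exists (St ((k + 1) / e)) => //; apply: pSt; rewrite ltW.
  rewrite (VAL _ t0).2 -EFinD lee_fin lerD2l invf_div.
  rewrite mulrA ler_pdivrMr // mulrDr mulr1 mulrC lerDl ltW //.
rewrite Inf.
have Hr : c + k * t^-1 @[t --> +oo] --> c.
  suff : c + k * t^-1 @[t --> +oo] --> c + k * 0 by rewrite mulr0 addr0.
  apply: cvgD; first exact: cvg_cst.
  apply: cvgMl_tmp.
  apply/(@gtr0_cvgV0 _ _ _ _ id); last exact: cvg_id.
  by apply: nbhs_pinfty_gt; rewrite num_real.
have H : (c + k * t^-1)%:E @[t --> +oo] --> c%:E.
  by apply: cvg_EFin; [exact: nearW | exact: Hr].
apply: (cvg_trans _ H); apply: near_eq_cvg.
near=> t.
have t0 : 0 < t by near: t; apply: nbhs_pinfty_gt; rewrite num_real.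
by rewrite (VAL t t0).2.
Unshelve. all: by end_near.
Qed.
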